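(* Let $D$ be a finite set with $|D|\ge2$, $k\ge2$, and let $P:D^k\to\{0,1\}$ be a $k$-ary predicate with $P^{-1}(1)=\{(a,a,\dots,a)\}$ for some $a\in D$. Then for every weighted directed $k$-uniform hypergraph $H=(V,E,w)$, every $0<\varepsilon<1$, and every $\varepsilon$-$P$-sparsifier $H_\varepsilon=(V,E_\varepsilon,w_\varepsilon)$ of $H$, we have $|E_\varepsilon|=\Omega(|E|)$, with the implied constant independent of $H$ and $\varepsilon$.
   Context: A weighted directed $k$-uniform hypergraph $H=(V,E,w)$ has $E$ a set of ordered $k$-tuples of distinct vertices and $w:E\to\mathbb{R}_{>0}$. For $A:V\to D$, $\mathrm{Val}_{H,P}(A)=\sum_{e\in E}w(e)P(A(e))$ with $A$ applied entrywise. An $\varepsilon$-$P$-sparsifier of $H$ is $H_\varepsilon=(V,E_\varepsilon,w_\varepsilon)$ with $E_\varepsilon\subseteq E$, $w_\varepsilon:E_\varepsilon\to\mathbb{R}_{>0}$, such that for every $A:V\to D$, $(1-\varepsilon)\mathrm{Val}_{H,P}(A)\le\mathrm{Val}_{H_\varepsilon,P}(A)\le(1+\varepsilon)\mathrm{Val}_{H,P}(A)$. *)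

(* Defs.v *)
From HB Require Import structures.
From mathcomp Require Import all_boot all_order all_algebra.
From mathcomp Require Import reals.
Set Implicit Arguments. Unset Strict Implicit. Unset Printing Implicit Defensive.
Import Order.TTheory GRing.Theory Num.Theory.
Local Open Scope ring_scope.

Definition is_wdhypergraph (R : realType) (V : finType) (k : nat)
    (E : {set k.-tuple V}) (w : k.-tuple V -> R) : Prop :=
  (forall e, e \in E -> uniq e) /\ (forall e, e \in E -> 0 < w e).

Definition Val (R : realType) (V D : finType) (k : nat)
    (E : {set k.-tuple V}) (w : k.-tuple V -> R)
    (P : k.-tuple D -> bool) (A : V -> D) : R :=
  \sum_(e in E) w e * (P (map_tuple A e))%:R.

Definition is_sparsifier (R : realType) (V D : finType) (k : nat)
    (P : k.-tuple D -> bool) (eps : R)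
    (E : {set k.-tuple V}) (w : k.-tuple V -> R)
    (Eeps : {set k.-tuple V}) (weps : k.-tuple V -> R) : Prop :=
  Eeps \subset E /\ (forall e, e \in Eeps -> 0 < weps e) /\
  forall A : V -> D,
    (1 - eps) * Val E w P A <= Val Eeps weps P A /\
    Val Eeps weps P A <= (1 + eps) * Val E w P A.

(* Main.v *)
Require Import Defs.
From HB Require Import structures.
From mathcomp Require Import all_boot all_order all_algebra.
From mathcomp Require Import reals.
Import Order.TTheory GRing.Theory Num.Theory.
Local Open Scope ring_scope.

Theorem proposition18 (R : realType) (D : finType) (k : nat)
    (P : k.-tuple D -> bool) (a : D) :
  (1 < #|D|)%N -> (2 <= k)%N ->
  (forall x : k.-tuple D, P x = (x == [tuple of nseq k a])) ->
  exists c : R, 0 < c /\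
    forall (V : finType) (E : {set k.-tuple V}) (w : k.-tuple V -> R)
      (eps : R) (Eeps : {set k.-tuple V}) (weps : k.-tuple V -> R),
      is_wdhypergraph E w -> 0 < eps -> eps < 1 ->
      is_sparsifier P eps E w Eeps weps ->
      c * #|E|%:R <= #|Eeps|%:R.
Proof.
move=> hD hk hP.
have [b hb] : exists b, b != a.
  case: (pickP (fun b => b != a)) => [b hb|H]; first by exists b.
  exfalso; move: hD; apply/negP; rewrite -leqNgt.
  have -> : #|D| = #|[set: D]| by rewrite cardsT.
  have := subset_leq_card (_ : [set: D] \subset [set a]); rewrite cards1; apply.
  apply/subsetP => x _; rewrite in_set1; have := H x; by case: (x == a).
have kpos : (0 < (k.+1) ^ k)%N by rewrite expn_gt0.
exists (((k.+1) ^ k)%:R^-1); split; first by rewrite invr_gt0 ltr0n.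
move=> V E w eps Eeps weps [Hu Hw] he0 he1 [Hsub [Hwe HA]].
rewrite mulrC ler_pdivrMr ?ltr0n // -natrM ler_nat.
pose Ae (e : k.-tuple V) (v : V) := if v \in e then a else b.
pose f (e : k.-tuple V) := odflt e [pick e' in Eeps | all (fun x => x \in e) e'].
have Pmap : forall e (e' : k.-tuple V), P (map_tuple (Ae e) e') = all (fun x => x \in e) e'.
  move=> e e'; rewrite hP; apply/eqP/allP => [Heq x xe|Hall].
    have := congr1 (fun t : k.-tuple D => val t) Heq => /= Hm.
    have : Ae e x \in nseq k a by rewrite -Hm; apply: map_f.
    move/nseqP => [ha _]; move: ha; rewrite /Ae; case: (x \in e) => //.
    by move=> hba; rewrite hba eqxx in hb.
  apply: val_inj => /=.
  rewrite -[in RHS](size_tuple e') -(size_map (Ae e)). apply: (elimT (all_pred1P _ _)). apply/allP => y. move=> /mapP [x xe' ->].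
  by rewrite /= /Ae (Hall x xe').
have Hf : forall e, e \in E -> (f e \in Eeps) && all (fun x => x \in e) (f e).
  move=> e eE; rewrite /f; case: pickP => [e' he'|Hn] //=.
  exfalso.
  have Vpos : 0 < Val E w P (Ae e).
    rewrite /Val (bigD1 e) //=.
    apply: ltr_wpDr.
      apply: sumr_ge0 => i /andP [iE _]; apply: mulr_ge0; first exact: ltW (Hw i iE).
      exact: ler0n.
    rewrite Pmap; have -> : all (fun x => x \in e) e by apply/allP.
    by rewrite mulr1; apply: Hw.
  have V0 : Val Eeps weps P (Ae e) = 0.
    rewrite /Val big1 // => i iE; rewrite Pmap.
    by have := Hn i; rewrite iE /= => ->; rewrite mulr0.
  have [H1 _] := HA (Ae e).
  move: H1; rewrite V0 => H1.
  have : 0 < (1 - eps) * Val E w P (Ae e) by rewrite mulr_gt0 // subr_gt0.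
  by rewrite ltNge H1.
have Hmem : forall e, e \in E -> f e =i e.
  move=> e eE; have /andP [fE /allP fa] := Hf e eE.
  have hs : (size e <= size (f e))%N by rewrite !size_tuple.
  by have [_ ] := uniq_min_size (Hu _ (subsetP Hsub _ fE)) fa hs.
pose h (e : k.-tuple V) := (f e, [tuple of map (fun x => (inord (index x (f e)) : 'I_k.+1)) e]).
have hinj : {in E &, injective h}.
  move=> e1 e2 e1E e2E [Hfe Ht].
  have [x0 _] : exists x0 : V, True.
    case: e1 {e1E Hfe Ht} => [[|x s] hs]; last by exists x.
    by move: hs hk; rewrite /= => /eqP <-.
  have Hrec : forall e, e \in E -> map (nth x0 (f e)) (map (fun i : 'I_k.+1 => nat_of_ord i) (map (fun x => inord (index x (f e))) e)) = e.
    move=> e eE; rewrite -!map_comp -[RHS]map_id; apply/eq_in_map => x xe /=.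
    rewrite inordK; first by rewrite nth_index // Hmem.
    apply: (leq_trans (index_size _ _)); by rewrite size_tuple.
  apply: val_inj => /=.
  rewrite -(Hrec e1 e1E) -(Hrec e2 e2E).
  by rewrite Ht Hfe.
have := card_in_imset hinj.
move=> <-.
have -> : (#|Eeps| * k.+1 ^ k = #|setX Eeps [set: k.-tuple 'I_k.+1]|)%N.
  by rewrite cardsX cardsT card_tuple card_ord.
apply: subset_leq_card; apply/subsetP => p /imsetP [e eE ->].
rewrite in_setX in_setT andbT.
by have /andP [] := Hf e eE.
Qed.
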